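(* Let $(\Omega,\mathcal{F},P)$ be a probability space with a filtration $(\mathcal{G}_t)_{t\in[0,1]}$, $\mathcal{G}_t\subset\mathcal{F}$, and let $1<\beta<\infty$. Let $\phi:\Omega\to L^\beta=L^\beta([0,1],\mathcal{B}([0,1]),\mathrm{Leb})$ be measurable (for the Borel $\sigma$-field of the weak topology) and such that $\sigma(\phi1_{[0,t]})\subset\mathcal{G}_t$ for all $t\in[0,1]$. Then there exists $\bar\phi:\Omega\times[0,1]\to\mathbb{R}$ with $\bar\phi(\omega,t)=\phi(\omega)(t)$ for $P\otimes\mathrm{Leb}$-almost every $(\omega,t)$, such that $\bar\phi$ is progressively measurable with respect to $(\mathcal{G}_t)_{t\in[0,1]}$. *)

(* Defs.v *)
From HB Require Import structures.
From mathcomp Require Import all_boot all_order all_algebra.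
From mathcomp Require Import all_classical all_reals all_analysis.
Set Implicit Arguments. Unset Strict Implicit. Unset Printing Implicit Defensive.
Import Order.TTheory GRing.Theory Num.Theory.
Local Open Scope classical_set_scope.
Local Open Scope ring_scope.

Section Defs.
Context {R : realType}.

(* f (a concrete representative) is an element of L^p([0,1], Borel, Leb) *)
Definition I01 : set R := `[(0:R), 1]%classic.

Definition Lp01 (p : R) (f : R -> R) : Prop :=
  measurable_fun `[(0:R), 1]%classic f /\
  (\int[@lebesgue_measure R]_(x in I01) ((`|f x| `^ p)%:E) < +oo)%E.

Definition pair01 (f g : R -> R) : R :=
  Rintegral (@lebesgue_measure R) `[(0:R), 1]%classic (fun x => f x * g x).

Definition conj_exp (p : R) : R := p / (p - 1).

(* open sets of the weak topology sigma(L^p, L^p') on L^p (dual of L^p is L^p') *)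
Definition weak_open (p : R) (A : set (R -> R)) : Prop :=
  A `<=` Lp01 p /\
  forall f, A f ->
    exists (n : nat) (g : nat -> R -> R) (e : R),
      0 < e /\ (forall i, (i < n)%N -> Lp01 (conj_exp p) (g i)) /\
      forall h, Lp01 p h ->
        (forall i, (i < n)%N -> `|pair01 h (g i) - pair01 f (g i)| < e) -> A h.

Definition weak_borel (p : R) : set (set (R -> R)) := <<s weak_open p >>.

Definition filtration {d} {T : measurableType d} (G : R -> set (set T)) : Prop :=
  (forall t, 0 <= t <= 1 -> sigma_algebra setT (G t) /\ G t `<=` measurable) /\
  (forall s t, 0 <= s -> s <= t -> t <= 1 -> G s `<=` G t).

Definition prog_measurable {d} {T : measurableType d}
    (G : R -> set (set T)) (f : T -> R -> R) : Prop :=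
  forall t, 0 <= t <= 1 -> forall B : set R, measurable B ->
    <<s [set X : set (T * R) | exists (A : set T) (C : set R),
            G t A /\ measurable C /\ C `<=` `[(0:R), t]%classic /\ X = A `*` C] >>
      [set z : T * R | `[(0:R), t]%classic z.2 /\ B (f z.1 z.2)].
End Defs.

(* Main.v *)
Require Import Defs.
From HB Require Import structures.
From mathcomp Require Import all_boot all_order all_algebra.
From mathcomp Require Import all_classical all_reals all_analysis.
From mathcomp Require Import measurable_realfun lebesgue_integral_differentiation.
From mathcomp Require Import ring lra.
Import Order.TTheory GRing.Theory Num.Theory.
Import numFieldNormedType.Exports.
Local Open Scope classical_set_scope.
Local Open Scope ring_scope.

Set Implicit Arguments. Unset Strict Implicit. Unset Printing Implicit Defensive.

Section H.
Context {R : realType}.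
Local Notation mu := (@lebesgue_measure R).

Lemma mI01 : measurable (I01 : set R).
Proof. exact: measurable_itv. Qed.

Lemma mI01L : measurable (I01 : set (measurableTypeR R)).
Proof. exact: measurable_itv. Qed.

Lemma Lp01_int (p : R) f : 1 <= p -> Lp01 p f -> mu.-integrable I01 (EFin \o f).
Proof.
move=> p1 [mf fin]; apply/integrableP; split; first exact/measurable_EFinP.
have mp : measurable_fun I01 (fun x => `|f x| `^ p).
  by apply: (measurableT_comp (measurable_powR _)); exact: measurableT_comp.
apply: (@le_lt_trans _ _ (\int[mu]_(x in I01) ((cst 1 x)%:E + (`|f x| `^ p)%:E))%E).
  apply: ge0_le_integral => //.
  - exact: mI01.
  - by apply: measurableT_comp => //; apply/measurable_EFinP.
  - by apply/measurable_EFinP; apply: measurable_funD => //.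
  - move=> x _; rewrite /= -EFinD lee_fin.
    have [x1|x1] := leP `|f x| 1.
      by rewrite (le_trans x1)// lerDl powR_ge0.
    rewrite (@le_trans _ _ (`|f x| `^ p)) ?lerDr//.
    by rewrite le1r_powR// ltW.
rewrite ge0_integralD//.
- rewrite (_ : (\int[mu]_(x in I01) (cst 1 x)%:E = \int[mu]_(x in I01) (cst 1 x))%E)//.
  rewrite lte_add_pinfty// integral_cst ?mI01//= /I01.
  by rewrite mul1e (@lebesgue_measure_itv R `[0%R, 1%R])/= lte_fin ltr01 ltry.
- exact: mI01.
- exact: mI01.
- exact/measurable_EFinP/measurable_cst.
- exact/measurable_EFinP.
Qed.

Lemma wb_Lp (p : R) : weak_borel p (Lp01 p).
Proof.
apply: sub_sigma_algebra; split => // f Af.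
by exists 0%N, (fun _ => cst 0), 1; split => //.
Qed.

Lemma wb_I (p : R) A B : weak_borel p A -> weak_borel p B -> weak_borel p (A `&` B).
Proof.
move=> wA wB; rewrite -[A]setCK -[B]setCK -setCU.
rewrite -setTD; apply: sigma_algebraCD.
rewrite -bigcup2E; apply: sigma_algebra_bigcup => -[|[|n]]/=.
- by rewrite -setTD; exact: sigma_algebraCD.
- by rewrite -setTD; exact: sigma_algebraCD.
- exact: sigma_algebra0.
Qed.

Lemma wb_pair (p : R) g (Y : set R) : Lp01 (conj_exp p) g -> measurable Y ->
  weak_borel p (Lp01 p `&` (fun f => pair01 f g) @^-1` Y).
Proof.
move=> Lg mY.
pose S := [set Y : set R | weak_borel p (Lp01 p `&` (fun f => pair01 f g) @^-1` Y)].
suff : <<s @RGenInftyO.G R >> `<=` S.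
  move=> /(_ Y); apply; have : (@ocitv R).-sigma.-measurable Y := mY.
  by rewrite (@RGenInftyO.measurableE R).
apply: smallest_sub.
  split.
  - by rewrite /S /= preimage_set0 setI0; exact: sigma_algebra0.
  - move=> A SA; rewrite /S /= setTD preimage_setC.
    have -> : Lp01 p `&` ~` ((fun f => pair01 f g) @^-1` A) =
      Lp01 p `&` ~` (Lp01 p `&` (fun f => pair01 f g) @^-1` A).
      by rewrite setCI setIUr setICr set0U.
    apply: wb_I; first exact: wb_Lp.
    by rewrite -setTD; apply: sigma_algebraCD.
  - move=> A SA; rewrite /S /= preimage_bigcup setI_bigcupr.
    exact: sigma_algebra_bigcup.
move=> _ [c ->]; apply: sub_sigma_algebra; split; first by move=> f [].
move=> f [Lf /=]; rewrite in_itv/= => fc.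
exists 1%N, (fun _ => g), (c - pair01 f g); split; first by rewrite subr_gt0.
split => // h Lh /(_ 0%N isT) hc; split => //=; rewrite in_itv/=.
have := ler_norm (pair01 h g - pair01 f g).
move=> /le_lt_trans /(_ hc); rewrite ltrBlDr subrK.
by [].
Qed.

Lemma powR_ind (C : set R) q x : 0 < q -> `|(\1_C x : R)| `^ q = \1_C x.
Proof.
move=> q0; rewrite indicE; case: (x \in C) => /=.
  by rewrite normr1 powR1.
by rewrite normr0 powR0 // gt_eqF.
Qed.

Lemma Lp01_ind (q : R) (C : set R) : 0 < q -> measurable C -> Lp01 q (\1_C).
Proof.
move=> q0 mC; split; first exact: measurable_indic.
under eq_integral do rewrite powR_ind//.
rewrite integral_indic//; last exact: mI01.
apply: (@le_lt_trans _ _ (mu I01)).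
  apply: le_measure.
  - by rewrite inE; apply: measurableI => //; exact: mI01.
  - by rewrite inE; exact: mI01.
  exact: subIsetr.
by rewrite /I01 (@lebesgue_measure_itv R `[0%R, 1%R])/= lte_fin ltr01 ltry.
Qed.

Lemma Lp01_mulind (p : R) f (C : set R) : 0 < p -> measurable C -> Lp01 p f ->
  Lp01 p (fun s => f s * \1_C s).
Proof.
move=> p0 mC [mf fin]; split.
  apply: measurable_funM => //; exact: measurable_indic.
apply: le_lt_trans fin; apply: ge0_le_integral => //.
- exact: mI01.
- apply: measurableT_comp => //; apply: (measurableT_comp (measurable_powR _)).
  apply: measurableT_comp => //; apply: measurable_funM => //.
- apply: measurableT_comp => //; apply: (measurableT_comp (measurable_powR _)).
  exact: measurableT_comp.
move=> x _; rewrite lee_fin indicE; case: (x \in C) => /=.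
  by rewrite mulr1.
by rewrite mulr0 normr0 powR0 ?gt_eqF// powR_ge0.
Qed.

Lemma pair_int (p : R) f g : 1 <= p -> Lp01 p (fun x => f x * g x) ->
  (pair01 f g)%:E = (\int[mu]_(x in I01) (f x * g x)%:E)%E.
Proof.
move=> p1 L; rewrite /pair01 /Rintegral fineK //.
exact: (integrable_fin_num mI01L (Lp01_int p1 L)).
Qed.

End H.

Section H2.
Context {R : realType}.
Local Notation mu := (@lebesgue_measure R).
Lemma memI (a u y : R) : (y \in `[a, u]%classic) = (a <= y <= u).
Proof.
by apply/idP/idP; [move/set_mem; rewrite /= in_itv|move=> h; apply: mem_set; rewrite /= in_itv].
Qed.

End H2.
Section H3.
Context {R : realType}.
Local Notation mu := (@lebesgue_measure R).
Lemma int_eq (f : R -> R) (a u : R) : 0 <= u <= 1 ->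
 (\int[mu]_(y in `[a,u]) ((f \_ I01) y)%:E =
  \int[mu]_(y in I01) ((f y * \1_`[0,u] y) * \1_`[a,u] y)%:E)%E.
Proof.
move=> /andP[u0 u1].
rewrite integral_mkcond [RHS]integral_mkcond; apply: eq_integral => y _.
rewrite /patch !indicE /I01 !memI.
have [ay|ay] := leP a y; have [yu|yu] := leP y u; have [y0|y0] := leP 0 y;
  have [y1|y1] := leP y 1 => //=; rewrite ?mulr1 ?mulr0 //.
all: try (exfalso; lra).
Qed.

Lemma key d (T : measurableType d) (G : R -> set (set T)) (beta : R)
  (phi : T -> R -> R) (u a : R) (Y : set R) :
  1 < beta -> (forall w, Lp01 beta (phi w)) ->
  (forall t, 0 <= t <= 1 -> forall B, weak_borel beta B ->
     G t ((fun w s => phi w s * \1_(`[(0:R), t]%classic) s) @^-1` B)) ->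
  0 <= u <= 1 -> measurable Y ->
  G u [set w | Y (fine (\int[mu]_(y in `[a,u]) ((phi w \_ I01) y)%:E)%E)].
Proof.
move=> b1 Lphi hG u01 mY.
have q0 : 0 < conj_exp beta by rewrite /conj_exp divr_gt0 ?subr_gt0// (lt_trans ltr01).
have LE : Lp01 (conj_exp beta) (\1_`[a,u]) := Lp01_ind q0 (measurable_itv _).
have := hG u u01 _ (wb_pair LE mY).
have b0 : 0 < beta by rewrite (lt_trans ltr01).
have Lu w : Lp01 beta (fun s => phi w s * \1_(`[(0:R), u]%classic) s).
  exact: Lp01_mulind b0 (measurable_itv _) (Lphi w).
have Luu w : Lp01 beta (fun s => (phi w s * \1_(`[(0:R), u]%classic) s) * \1_`[a,u] s).
  exact: Lp01_mulind b0 (measurable_itv _) (Lu w).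
congr (G u _); apply/seteqP; split => w /=.
  by move=> [_]; rewrite int_eq// -(pair_int (ltW b1) (Luu w)).
by rewrite int_eq// -(pair_int (ltW b1) (Luu w)) => ?; split.
Qed.
End H3.

Section H3.
Context {R : realType}.
Local Notation mu := (@lebesgue_measure R).

Definition fl (n : nat) (x : R) : R := (Num.floor (x * n.+1%:R))%:~R.
Definition EE (x : R) (n : nat) : set R :=
  `[(fl n x - 1) / n.+1%:R, fl n x / n.+1%:R]%classic.

Lemma fl_le n x : fl n x <= x * n.+1%:R.
Proof. exact: floor_le. Qed.
Lemma fl_gt n x : x * n.+1%:R < fl n x + 1.
Proof. by rewrite /fl -[1]/(1%:~R) -intrD floorD1_gt. Qed.

Lemma EE_nice x : nicely_shrinking x (EE x).
Proof.
split; first by move=> n; exact: measurable_itv.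
exists (6, fun n => (3 / n.+1%:R)%:pos); split => /=.
- lra.
- rewrite -(mulr0 (3:R)); apply: cvgM; [exact: cvg_cst| exact: cvg_harmonic].
- move=> n y; rewrite /EE /ball /= in_itv /= => /andP[y1 y2].
  have N0 : 0 < n.+1%:R :> R by [].
  have h1 := fl_le n x; have h2 := fl_gt n x.
  rewrite ler_pdivrMr// in y1; rewrite ler_pdivlMr// in y2.
  rewrite ltr_pdivlMr// -[n.+1%:R in X in X < _](ger0_norm (ltW N0)) -normrM mulrBl ltr_norml.
  apply/andP; split; lra.
- move=> n; rewrite lebesgue_measure_ball// /EE lebesgue_measure_itv/= lte_fin.
  have N0 : 0 < n.+1%:R :> R by [].
  rewrite ltr_pM2r ?invr_gt0// ltrBlDr ltrDl ltr01 -EFinD -EFinM lee_fin.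
  rewrite -mulrBl opprB addrC subrK mul1r.
  rewrite (_ : 3 / n.+1%:R *+ 2 = 6 / n.+1%:R)//.
  by rewrite -mulr_natr mulrAC -natrM.
Qed.

Definition Av (f : R -> R) (n : nat) (s : R) : \bar R :=
  ((mu (EE s n))^-1 * \int[mu]_(y in EE s n) ((f \_ I01) y)%:E)%E.

Definition fbar (f : R -> R) (s : R) : R := fine (limn_esup (fun n => Av f n s)).

Lemma fbar_ae (p : R) f : 1 <= p -> Lp01 p f ->
  {ae mu, forall s, I01 s -> fbar f s = f s}.
Proof.
move=> p1 Lf.
have loc : locally_integrable setT (f \_ I01).
  apply: open_integrable_locally; first exact: openT.
  rewrite -restrict_EFin; apply/(integrable_mkcond _ mI01L).
  exact: Lp01_int p1 Lf.
move: (lebesgue_differentiation loc); apply: filterS; first exact: (ae_filter_ringOfSetsType mu).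
move=> s lp I01s.
have := nice_lebesgue_differentiation EE_nice loc lp.
rewrite /fbar => h; rewrite limn_esup_lim (cvg_lim _ (cvg_esups h))//=.
by rewrite patchT// inE.
Qed.

Lemma fl_piece n k (s : R) : k%:R / n.+1%:R <= s < k.+1%:R / n.+1%:R -> fl n s = k%:R.
Proof.
have N0 : 0 < n.+1%:R :> R by [].
move=> /andP[h1 h2]; rewrite /fl (@floor_def _ _ k%:Z).
  by [].
rewrite -ler_pdivrMr// -ltr_pdivlMr//.
by rewrite intrD -pmulrn (_ : 1%:~R = 1)// h1 natr1 h2.
Qed.

Lemma fl_nat n k : fl n (k%:R / n.+1%:R) = k%:R :> R.
Proof. by apply: fl_piece; apply/andP; split => //; rewrite ltr_pM2r ?invr_gt0// ltr_nat. Qed.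

Lemma fl_cover n (s : R) : 0 <= s -> exists k : nat, k%:R / n.+1%:R <= s < k.+1%:R / n.+1%:R.
Proof.
have N0 : 0 < n.+1%:R :> R by [].
move=> s0; exists (Num.truncn (s * n.+1%:R)).
rewrite ler_pdivrMr// ltr_pdivlMr//; apply: truncn_itv.
exact: mulr_ge0.
Qed.

Lemma mitvL (i : interval R) : measurable ([set` i] : set (measurableTypeR R)).
Proof. exact: measurable_itv. Qed.

Lemma muEE s n : mu (EE s n) = (n.+1%:R^-1)%:E.
Proof.
have N0 : 0 < n.+1%:R :> R by [].
rewrite /EE lebesgue_measure_itv/= lte_fin ltr_pM2r ?invr_gt0// ltrBlDr ltrDl ltr01.
by rewrite -EFinD -mulrBl opprB addrC subrK mul1r.
Qed.

Lemma int_patch (p : R) f : 1 <= p -> Lp01 p f ->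
  mu.-integrable setT (EFin \o (f \_ I01)).
Proof.
move=> p1 Lf; rewrite -restrict_EFin; apply/(integrable_mkcond _ mI01L).
exact: Lp01_int p1 Lf.
Qed.

Lemma Av_eq (p : R) f n s : 1 <= p -> Lp01 p f ->
  Av f n s = (n.+1%:R * fine (\int[mu]_(y in EE s n) ((f \_ I01) y)%:E))%:E.
Proof.
move=> p1 Lf; rewrite /Av muEE inver invr_eq0 gt_eqF// invrK EFinM fineK//.
apply: (integrable_fin_num (mitvL _)).
apply: integrableS (int_patch p1 Lf) => //; exact: mitvL.
Qed.
End H3.

Section H4.
Context {R : realType}.
Local Notation mu := (@lebesgue_measure R).

Lemma Av_fl f n (s s' : R) : fl n s = fl n s' -> Av f n s = Av f n s'.
Proof. by rewrite /Av /EE => ->. Qed.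

Lemma prog d (T : measurableType d) (G : R -> set (set T)) (beta : R)
  (phi : T -> R -> R) :
  filtration G -> 1 < beta -> (forall w, Lp01 beta (phi w)) ->
  (forall t, 0 <= t <= 1 -> forall B, weak_borel beta B ->
     G t ((fun w s => phi w s * \1_(`[(0:R), t]%classic) s) @^-1` B)) ->
  prog_measurable G (fun w => fbar (phi w)).
Proof.
move=> [hGs hGm] b1 Lphi hG t t01 B mB.
set Gen := [set X : set (T * R) | exists (A : set T) (C : set R),
            G t A /\ measurable C /\ C `<=` `[(0:R), t]%classic /\ X = A `*` C].
pose M := g_sigma_algebraType Gen.
pose D : set M := [set z | `[(0:R), t]%classic z.2].
pose F : M -> R := fun z => fbar (phi z.1) z.2.
have GtT : G t setT.
  have [[G0 GC _] _] := hGs t t01; by rewrite -(setD0 [set: T]); apply: GC.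
have mD : measurable D.
  apply: sub_sigma_algebra; exists setT, `[(0:R), t]%classic; split => //.
  split; first exact: measurable_itv.
  split => //; apply/seteqP; split => z /=; first by case.
  by move=> [_ ?].
suff mF : measurable_fun D F by exact: (mF mD B mB).
rewrite /F /fbar; apply: measurableT_comp => //.
apply: measurable_fun_limn_esup => n _ Y mY.
have N0 : 0 < n.+1%:R :> R by [].
pose Ck (k : nat) : set R := `[(0:R), t]%classic `&` `[k%:R / n.+1%:R, k.+1%:R / n.+1%:R[%classic.
pose Ak (k : nat) : set T := [set w | Y (Av (phi w) n (k%:R / n.+1%:R))].
have -> : D `&` (fun x : M => Av (phi x.1) n x.2) @^-1` Y = \bigcup_k (Ak k `*` Ck k).
  apply/seteqP; split.
  - move=> [w s] [/= Ds HY].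
    have s0 : 0 <= s by move: Ds; rewrite /D /= in_itv /= => /andP[].
    have [k hk] := fl_cover n s0.
    exists k => //; split => /=.
      by rewrite /Ak /= (@Av_fl _ n (k%:R / n.+1%:R) s); last by rewrite fl_nat (fl_piece hk).
    by split => //=; rewrite in_itv /=.
  - move=> [w s] [k _ [/= HY [Ds hk]]]; split => //=.
    move: hk; rewrite /= in_itv /= => hk.
    by move: HY; rewrite /Ak /= (@Av_fl _ n (k%:R / n.+1%:R) s); last by rewrite fl_nat (fl_piece hk).
apply: bigcupT_measurable => k.
have k0 : 0 <= k%:R / n.+1%:R :> R by rewrite divr_ge0.
have [kt|kt] := leP (k%:R / n.+1%:R) t; last first.
  rewrite (_ : Ck k = set0) ?setX0; first exact: measurable0.
  apply/seteqP; split => s //= [].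
  rewrite /= !in_itv /= => /andP[_ st] /andP[ks _].
  by have := lt_le_trans kt (le_trans ks st); rewrite ltxx.
apply: sub_sigma_algebra; exists (Ak k), (Ck k); split; last first.
  split; first by apply: measurableI; exact: measurable_itv.
  by split => //; exact: subIsetl.
move: t01 => /andP[t0 t1].
apply: (hGm (k%:R / n.+1%:R) t) => //.
have -> : Ak k = [set w | ((fun x => (n.+1%:R * x)%:E) @^-1` Y)
    (fine (\int[mu]_(y in `[((k%:R - 1) / n.+1%:R)%R, (k%:R / n.+1%:R)%R]) ((phi w \_ I01) y)%:E)%E)].
  by apply/seteqP; split => w; rewrite /Ak /= (Av_eq _ _ (ltW b1) (Lphi w)) /EE fl_nat.
apply: key => //.
  by [].
  by rewrite k0 (le_trans kt).
have mf : measurable_fun setT (fun x : R => (n.+1%:R * x)%:E).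
  exact: measurableT_comp (mulrl_measurable _).
by have := mf measurableT Y mY; rewrite setTI.
Qed.
End H4.

Unset Implicit Arguments.

Theorem lemma6p6 (R : realType) (d : measure_display) (T : measurableType d)
  (P : probability T R) (G : R -> set (set T)) (beta : R)
  (phi : T -> R -> R) :
  filtration G -> 1 < beta ->
  (forall w, Lp01 beta (phi w)) ->
  (forall B, weak_borel beta B -> measurable (phi @^-1` B)) ->
  (forall t, 0 <= t <= 1 -> forall B, weak_borel beta B ->
     G t ((fun w s => phi w s * \1_(`[(0:R), t]%classic) s) @^-1` B)) ->
  exists phibar : T -> R -> R,
    {ae P, forall w, {ae @lebesgue_measure R, forall s,
        `[(0:R), 1]%classic s -> phibar w s = phi w s}} /\
    prog_measurable G phibar.
Proof.
move=> hF b1 Lphi _ hG; exists (fun w => fbar (phi w)); split.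
  apply: aeW => w; exact: (fbar_ae (ltW b1) (Lphi w)).
exact: (prog hF b1 Lphi hG).
Qed.
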